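(* There is an existential formula $\phi(X,Y,Z)$ in the signature of $\mathcal{L}(I)$ such that for all finite subsets $A,B,C$ of $I$, $\mathcal{L}(I)\models\phi(A,B,C)$ if and only if $\mathrm{ips}(A,B)=C$.
   Context: Let $I$ be a dense linear order with left endpoint $0$ and no right endpoint. Let $\mathcal{P}_{\mathrm{fci}}(I)$ be the set of finite unions of closed intervals $[i,j]$, $[i,+\infty)$, $(-\infty,j]$ of $I$. $\mathcal{L}(I)$ is the structure with universe $\mathcal{P}_{\mathrm{fci}}(I)$ in the signature $\{\cup,\cap,\bot,c_0,\min,\max,l,r\}$, interpreted as follows. - $\cup$ and $\cap$ are union and intersection. - $\bot$ is $\emptyset$, and $c_0$ is $\{0\}$. - $\min(A)$ is the singleton of the least element of $A$, with $\min(\emptyset)=\emptyset$. - $\max(A)$ is the singleton of the greatest element when $A$ is nonempty and bounded, and $\emptyset$ otherwise. - $l(A)$ and $r(A)$ are the sets of left and right endpoints of $A$. Left endpoints are the minima of the maximal closed intervals composing $A$. Right endpoints are the maxima of the bounded ones. For finite $A,B$, $\mathrm{ips}(A,B)=\{i\in A: s_A(i)\in B\}$, where $s_A$ is the successor function of $A$ with the induced order. *)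

(* Defs.v *)
From Stdlib Require Import List.

Section LI.
Context {T : Type} (lt : T -> T -> Prop).

Definition le (x y : T) : Prop := lt x y \/ x = y.

Definition strict_total_order : Prop :=
  (forall x, ~ lt x x) /\
  (forall x y z, lt x y -> lt y z -> lt x z) /\
  (forall x y, lt x y \/ x = y \/ lt y x).

Definition dense_order : Prop :=
  forall x y, lt x y -> exists z, lt x z /\ lt z y.

Definition least_element (z : T) : Prop := forall x, le z x.

Definition no_right_endpoint : Prop := forall x, exists y, lt x y.

Definition seteq (A B : T -> Prop) : Prop := forall x, A x <-> B x.

Definition finite_set (A : T -> Prop) : Prop :=
  exists s : list T, forall x, A x <-> In x s.

Inductive cinterval : Type :=
  | Icc (i j : T)
  | Ici (i : T)
  | Iic (j : T).

Definition ivl (J : cinterval) : T -> Prop :=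
  match J with
  | Icc i j => fun x => le i x /\ le x j
  | Ici i => fun x => le i x
  | Iic j => fun x => le x j
  end.

Definition fci (A : T -> Prop) : Prop :=
  exists s : list cinterval, forall x, A x <-> exists J, In J s /\ ivl J x.

Definition is_min (A : T -> Prop) (x : T) : Prop := A x /\ forall y, A y -> le x y.
Definition is_max (A : T -> Prop) (x : T) : Prop := A x /\ forall y, A y -> le y x.

Definition max_ci (A : T -> Prop) (J : cinterval) : Prop :=
  (forall x, ivl J x -> A x) /\
  (forall J', (forall x, ivl J x -> ivl J' x) -> (forall x, ivl J' x -> A x) ->
              forall x, ivl J' x -> ivl J x).

Definition bounded_ci (J : cinterval) : Prop :=
  exists b, forall x, ivl J x -> le x b.

Definition op_cup (A B : T -> Prop) : T -> Prop := fun x => A x \/ B x.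
Definition op_cap (A B : T -> Prop) : T -> Prop := fun x => A x /\ B x.
Definition op_bot : T -> Prop := fun _ => False.
Definition op_c0 (zero : T) : T -> Prop := fun x => x = zero.
Definition op_min (A : T -> Prop) : T -> Prop := fun x => is_min A x.
Definition op_max (A : T -> Prop) : T -> Prop :=
  fun x => (exists b, forall y, A y -> le y b) /\ is_max A x.
Definition op_l (A : T -> Prop) : T -> Prop :=
  fun x => exists J, max_ci A J /\ is_min (ivl J) x.
Definition op_r (A : T -> Prop) : T -> Prop :=
  fun x => exists J, max_ci A J /\ bounded_ci J /\ is_max (ivl J) x.

(* successor-based ips(A,B) = { i in A : s_A(i) in B } *)
Definition ips (A B : T -> Prop) : T -> Prop :=
  fun i => A i /\ exists j, A j /\ lt i j /\ (forall k, A k -> lt i k -> le j k) /\ B j.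

End LI.

Inductive term : Type :=
  | TVar (n : nat)
  | TCup (t1 t2 : term)
  | TCap (t1 t2 : term)
  | TBot
  | TC0
  | TMin (t : term)
  | TMax (t : term)
  | TL (t : term)
  | TR (t : term).

Inductive qfformula : Type :=
  | FEq (t1 t2 : term)
  | FNot (f : qfformula)
  | FAnd (f1 f2 : qfformula)
  | FOr (f1 f2 : qfformula).

Inductive exformula : Type :=
  | EQF (f : qfformula)
  | EEx (n : nat) (f : exformula).

Section Sem.
Context {T : Type} (lt : T -> T -> Prop) (zero : T).

Fixpoint eval_term (env : nat -> T -> Prop) (t : term) : T -> Prop :=
  match t with
  | TVar n => env n
  | TCup t1 t2 => op_cup (eval_term env t1) (eval_term env t2)
  | TCap t1 t2 => op_cap (eval_term env t1) (eval_term env t2)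
  | TBot => op_bot
  | TC0 => op_c0 zero
  | TMin t => op_min lt (eval_term env t)
  | TMax t => op_max lt (eval_term env t)
  | TL t => op_l lt (eval_term env t)
  | TR t => op_r lt (eval_term env t)
  end.

Fixpoint sat_qf (env : nat -> T -> Prop) (f : qfformula) : Prop :=
  match f with
  | FEq t1 t2 => seteq (eval_term env t1) (eval_term env t2)
  | FNot f => ~ sat_qf env f
  | FAnd f1 f2 => sat_qf env f1 /\ sat_qf env f2
  | FOr f1 f2 => sat_qf env f1 \/ sat_qf env f2
  end.

Definition update (env : nat -> T -> Prop) (n : nat) (S : T -> Prop) : nat -> T -> Prop :=
  fun m => if Nat.eqb m n then S else env m.

Fixpoint sat_ex (env : nat -> T -> Prop) (f : exformula) : Prop :=
  match f with
  | EQF g => sat_qf env g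
  | EEx n g => exists S, fci lt S /\ sat_ex (update env n S) g
  end.

End Sem.

(* Main.v *)
Require Import Defs.
From Stdlib Require Import List Classical ClassicalEpsilon.

Section Gen.
Context {T : Type} (lt : T -> T -> Prop) (zero : T)
  (Hord : strict_total_order lt) (Hdense : dense_order lt)
  (Hzero : least_element lt zero) (Hnoright : no_right_endpoint lt).

Lemma irr x : ~ lt x x. Proof. destruct Hord as [h _]; apply h. Qed.
Lemma trans x y z : lt x y -> lt y z -> lt x z.
Proof. destruct Hord as [_ [h _]]; apply h. Qed.
Lemma tri x y : lt x y \/ x = y \/ lt y x.
Proof. destruct Hord as [_ [_ h]]; apply h. Qed.
Lemma le_refl x : le lt x x. Proof. right; reflexivity. Qed.
Lemma le_trans x y z : le lt x y -> le lt y z -> le lt x z.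
Proof. unfold le; intros [h|h] [g|g]; subst; eauto using trans. Qed.
Lemma lt_le_trans x y z : lt x y -> le lt y z -> lt x z.
Proof. intros h [g|g]; subst; eauto using trans. Qed.
Lemma le_lt_trans x y z : le lt x y -> lt y z -> lt x z.
Proof. intros [h|h] g; subst; eauto using trans. Qed.
Lemma lt_not_le x y : lt x y -> ~ le lt y x.
Proof. intros h [g|g]; subst. apply (irr x); eauto using trans. apply (irr _ h). Qed.
Lemma not_lt_le x y : ~ lt x y -> le lt y x.
Proof. destruct (tri x y) as [h|[h|h]]; intro; [contradiction| subst; apply le_refl| left; auto]. Qed.
Lemma le_antisym x y : le lt x y -> le lt y x -> x = y.
Proof. intros [h|h] g; auto. exfalso; apply (lt_not_le _ _ h g). Qed.
Lemma lt_le x y : lt x y -> le lt x y. Proof. left; auto. Qed.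

Definition sub_icc (S : T -> Prop) x y := forall z, le lt x z -> le lt z y -> S z.
Definition lgap S x := forall p, lt p x -> ~ sub_icc S p x.
Definition rgap S y := forall p, lt y p -> ~ sub_icc S y p.

Lemma ivl_conv J a b z : ivl lt J a -> ivl lt J b -> le lt a z -> le lt z b -> ivl lt J z.
Proof. destruct J; simpl; intuition eauto using le_trans. Qed.

Lemma N_l S x : op_l lt S x -> S x /\ lgap S x.
Proof.
  intros [J [[Hsub Hmax] [Hx Hmin]]]. split; [auto|]. intros p hp hs.
  destruct J as [i j|i|j]; simpl in *.
  - assert (xi : x = i).
    { apply le_antisym; [apply Hmin; split; [apply le_refl|] | ]; tauto || (destruct Hx; eauto using le_trans). }
    subst x.
    specialize (Hmax (Icc p j)); simpl in Hmax.
    assert (H : le lt i p /\ le lt p j).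
    { apply Hmax.
      - intros z [h1 h2]; split; eauto using le_trans, lt_le.
      - intros z [h1 h2]. destruct (tri z i) as [h|[h|h]].
        + apply hs; auto using lt_le.
        + subst; apply hs; auto using le_refl.
        + apply Hsub; split; auto using lt_le.
      - split; [apply le_refl|]. destruct Hx; eauto using le_trans, lt_le. }
    destruct H as [H _]. exact (lt_not_le _ _ hp H).
  - assert (xi : x = i) by (apply le_antisym; auto using le_refl).
    subst x.
    specialize (Hmax (Ici p)); simpl in Hmax.
    assert (H : le lt i p).
    { apply Hmax.
      - intros z h1; eauto using le_trans, lt_le.
      - intros z h1. destruct (tri z i) as [h|[h|h]].
        + apply hs; auto using lt_le.
        + subst; apply hs; auto using le_refl.
        + apply Hsub; auto using lt_le.
      - apply le_refl. }
    exact (lt_not_le _ _ hp H).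
  - assert (le lt x p) by (apply Hmin; eauto using le_trans, lt_le).
    exact (lt_not_le _ _ hp H).
Qed.

Lemma N_r S x : op_r lt S x -> S x /\ rgap S x.
Proof.
  intros [J [[Hsub Hmax] [_ [Hx Hmx]]]]. split; [auto|]. intros p hp hs.
  destruct J as [i j|i|j]; simpl in *.
  - assert (xj : x = j).
    { apply le_antisym; [tauto|]. apply Hmx; split; [|apply le_refl]. destruct Hx; eauto using le_trans. }
    subst x.
    specialize (Hmax (Icc i p)); simpl in Hmax.
    assert (H : le lt i p /\ le lt p j).
    { apply Hmax.
      - intros z [h1 h2]; split; eauto using le_trans, lt_le.
      - intros z [h1 h2]. destruct (tri z j) as [h|[h|h]].
        + apply Hsub; split; auto using lt_le.
        + subst; apply hs; auto using le_refl.
        + apply hs; auto using lt_le.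
      - split; [|apply le_refl]. destruct Hx; eauto using le_trans, lt_le. }
    destruct H as [_ H]. exact (lt_not_le _ _ hp H).
  - assert (le lt p x) by (apply Hmx; eauto using le_trans, lt_le).
    exact (lt_not_le _ _ hp H).
  - assert (xj : x = j) by (apply le_antisym; auto using le_refl).
    subst x.
    specialize (Hmax (Iic p)); simpl in Hmax.
    assert (H : le lt p j).
    { apply Hmax.
      - intros z h1; eauto using le_trans, lt_le.
      - intros z h1. destruct (tri z j) as [h|[h|h]].
        + apply Hsub; auto using lt_le.
        + subst; apply hs; auto using le_refl.
        + apply hs; auto using lt_le.
      - apply le_refl. }
    exact (lt_not_le _ _ hp H).
Qed.

Lemma E_l S x : op_l lt S x ->
  (forall z, le lt x z -> S z) \/ exists y, le lt x y /\ sub_icc S x y /\ rgap S y.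
Proof.
  intros [J [[Hsub Hmax] [Hx Hmin]]].
  destruct J as [i j|i|j]; simpl in *.
  - assert (xi : x = i).
    { apply le_antisym; [apply Hmin; split; [apply le_refl|] | ]; tauto || (destruct Hx; eauto using le_trans). }
    subst x. right. exists j. split; [tauto|]. split.
    + intros z h1 h2; apply Hsub; auto.
    + intros p hp hs.
      specialize (Hmax (Icc i p)); simpl in Hmax.
      assert (H : le lt i p /\ le lt p j).
      { apply Hmax.
        - intros z [h1 h2]; split; eauto using le_trans, lt_le.
        - intros z [h1 h2]. destruct (tri z j) as [h|[h|h]].
          + apply Hsub; split; auto using lt_le.
          + subst; apply hs; auto using le_refl.
          + apply hs; auto using lt_le.
        - split; [|apply le_refl]. destruct Hx; eauto using le_trans, lt_le. }
      destruct H as [_ H]. exact (lt_not_le _ _ hp H).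
  - assert (xi : x = i) by (apply le_antisym; auto using le_refl).
    subst x. left. auto.
  - right. exists j. split; [auto|]. split.
    + intros z h1 h2; apply Hsub; auto.
    + intros p hp hs.
      specialize (Hmax (Iic p)); simpl in Hmax.
      assert (H : le lt p j).
      { apply Hmax.
        - intros z h1; eauto using le_trans, lt_le.
        - intros z h1. destruct (tri z j) as [h|[h|h]].
          + apply Hsub; auto using lt_le.
          + subst; apply hs; auto using le_refl.
          + apply hs; auto using lt_le.
        - apply le_refl. }
      exact (lt_not_le _ _ hp H).
Qed.

Lemma E_r S x : op_r lt S x -> exists w, le lt w x /\ sub_icc S w x /\ lgap S w.
Proof.
  intros [J [[Hsub Hmax] [_ [Hx Hmx]]]].
  destruct J as [i j|i|j]; simpl in *.
  - assert (xj : x = j).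
    { apply le_antisym; [tauto|]. apply Hmx; split; [|apply le_refl]. destruct Hx; eauto using le_trans. }
    subst x. exists i. split; [tauto|]. split.
    + intros z h1 h2; apply Hsub; auto.
    + intros p hp hs.
      specialize (Hmax (Icc p j)); simpl in Hmax.
      assert (H : le lt i p /\ le lt p j).
      { apply Hmax.
        - intros z [h1 h2]; split; eauto using le_trans, lt_le.
        - intros z [h1 h2]. destruct (tri z i) as [h|[h|h]].
          + apply hs; auto using lt_le.
          + subst; apply hs; auto using le_refl.
          + apply Hsub; split; auto using lt_le.
        - split; [apply le_refl|]. destruct Hx; eauto using le_trans, lt_le. }
      destruct H as [H _]. exact (lt_not_le _ _ hp H).
  - exfalso. destruct (Hnoright x) as [y hy].
    assert (le lt y x) by (apply Hmx; eauto using le_trans, lt_le).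
    exact (lt_not_le _ _ hy H).
  - assert (xj : x = j) by (apply le_antisym; auto using le_refl).
    subst x. exists zero. split; [apply Hzero|]. split.
    + intros z h1 h2; apply Hsub; auto.
    + intros p hp _. exact (lt_not_le _ _ hp (Hzero p)).
Qed.

Lemma max_icc S x y J' : sub_icc S x y -> lgap S x -> rgap S y -> le lt x y ->
  (forall z, ivl lt (Icc x y) z -> ivl lt J' z) -> (forall z, ivl lt J' z -> S z) ->
  forall z, ivl lt J' z -> ivl lt (Icc x y) z.
Proof.
  intros hs hl hr hxy h1 h2 z hz. simpl.
  assert (hx : ivl lt J' x) by (apply h1; simpl; auto using le_refl).
  assert (hy : ivl lt J' y) by (apply h1; simpl; auto using le_refl).
  split.
  - apply not_lt_le; intro h. apply (hl z h). intros w a b. apply h2. exact (ivl_conv J' z x w hz hx a b).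
  - apply not_lt_le; intro h. apply (hr z h). intros w a b. apply h2. exact (ivl_conv J' y z w hy hz a b).
Qed.

Lemma Suff_l S x y : le lt x y -> sub_icc S x y -> lgap S x -> rgap S y -> op_l lt S x.
Proof.
  intros hxy hs hl hr. exists (Icc x y). split; [split|].
  - intros z [a b]; apply hs; auto.
  - intros J' h1 h2. eapply max_icc; eauto.
  - simpl. split; [split; auto using le_refl|]. intros z [a b]; auto.
Qed.

Lemma Suff_r S x y : le lt x y -> sub_icc S x y -> lgap S x -> rgap S y -> op_r lt S y.
Proof.
  intros hxy hs hl hr. exists (Icc x y). split; [split|split].
  - intros z [a b]; apply hs; auto.
  - intros J' h1 h2. eapply max_icc; eauto.
  - exists y. intros z [a b]; auto.
  - simpl. split; [split; auto using le_refl|]. intros z [a b]; auto.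
Qed.

Lemma succ_ex (A : T -> Prop) : finite_set A -> forall x y, A y -> lt x y ->
  exists s, A s /\ lt x s /\ forall k, A k -> lt x k -> le lt s k.
Proof.
  intros [l hl] x y hy hxy.
  assert (aux : forall l', (exists y, In y l' /\ lt x y) ->
     exists s, In s l' /\ lt x s /\ forall k, In k l' -> lt x k -> le lt s k).
  { induction l' as [|a l' IH]; intros [y0 [hy0 hxy0]].
    - destruct hy0.
    - destruct (classic (exists y, In y l' /\ lt x y)) as [h|h].
      + destruct (IH h) as [s [hs1 [hs2 hs3]]].
        destruct (classic (lt x a)) as [ha|ha].
        * destruct (tri a s) as [c|[c|c]].
          -- exists a. split; [left; auto|]. split; auto. intros k [e|e] hk.
             ++ subst; apply le_refl.
             ++ left. eapply lt_le_trans; eauto.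
          -- subst. exists s. split; [right; auto|]. split; auto. intros k [e|e] hk.
             ++ subst; apply le_refl.
             ++ auto.
          -- exists s. split; [right; auto|]. split; auto. intros k [e|e] hk.
             ++ subst; left; auto.
             ++ auto.
        * exists s. split; [right; auto|]. split; auto. intros k [e|e] hk.
          -- subst; contradiction.
          -- auto.
      + destruct hy0 as [e|e].
        * subst. exists y0. split; [left; auto|]. split; auto. intros k [e|e] hk.
          -- subst; apply le_refl.
          -- exfalso; apply h; eauto.
        * exfalso; apply h; eauto. }
  destruct (aux l) as [s [h1 [h2 h3]]].
  - exists y; split; auto. apply hl; auto.
  - exists s. split; [apply hl; auto|]. split; auto. intros k hk hk'. apply h3; auto. apply hl; auto.
Qed.

Definition Succ (A : T -> Prop) a s :=
  A a /\ A s /\ lt a s /\ forall k, A k -> lt a k -> le lt s k.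

Lemma forward (A B C U V P Q : T -> Prop) (fA : finite_set A)
 (h1 : seteq A (op_cup (op_l lt U) (op_max lt A)))
 (h2 : seteq (op_cap U A) (op_l lt U))
 (h3 : seteq (op_cap (op_r lt U) A) op_bot)
 (h4 : seteq (op_l lt V) (op_r lt U))
 (h5 : seteq (op_cap V A) (op_r lt V))
 (h6 : seteq (op_cap C A) C)
 (h7 : seteq (op_l lt P) C)
 (h8 : seteq (op_cap P U) P)
 (h9 : seteq (op_r lt P) (op_l lt Q))
 (h10 : seteq (op_cap Q V) Q)
 (h11 : seteq (op_r lt Q) (op_cap B (op_r lt V)))
 (h12 : seteq (op_cap (op_r lt P) (op_r lt U)) (op_r lt P))
 (h13 : seteq (op_cap C (op_max lt A)) op_bot) :
 seteq (ips lt A B) C.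
Proof.
  unfold seteq, op_cup, op_cap, op_bot in *.
  assert (QV : forall z, Q z -> V z) by (intros z hz; exact (proj2 (proj2 (h10 z) hz))).
  assert (PU : forall z, P z -> U z) by (intros z hz; exact (proj2 (proj2 (h8 z) hz))).
  assert (st : forall c s, Succ A c s -> op_l lt U c /\ exists y, lt c y /\ lt y s /\
     sub_icc U c y /\ rgap U y /\ op_r lt U y /\ op_l lt V y /\ sub_icc V y s /\ op_r lt V s).
  { intros c s [Ac [As [cs smin]]].
    assert (lUc : op_l lt U c).
    { destruct (proj1 (h1 c) Ac) as [h|[_ [_ hm]]]; auto.
      exfalso; exact (lt_not_le _ _ cs (hm s As)). }
    assert (Us_false : sub_icc U c s -> False).
    { intro h. assert (lUs : op_l lt U s).
      { apply h2; split; [apply h; [left; auto | apply le_refl] | auto]. }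
      destruct (N_l _ _ lUs) as [_ g]. exact (g c cs h). }
    split; auto.
    destruct (E_l _ _ lUc) as [hinf | [y [cy [sU rU]]]].
    - exfalso; apply Us_false; intros z a b; apply hinf; auto.
    - assert (ys : lt y s).
      { destruct (tri y s) as [h|[h|h]]; auto; exfalso; apply Us_false; intros z a b; apply sU; auto.
        + subst; auto.
        + eauto using le_trans, lt_le. }
      assert (rUy : op_r lt U y) by (apply (Suff_r U c y); auto; apply (N_l _ _ lUc)).
      assert (cy' : lt c y).
      { destruct cy as [h|h]; auto. subst. exfalso. apply (proj1 (h3 y)). split; auto. }
      assert (lVy : op_l lt V y) by (apply h4; auto).
      assert (Vs_bad : forall p, lt s p -> sub_icc V s p -> False).
      { intros p sp h. assert (rVs : op_r lt V s).
        { apply h5; split; [apply h; [apply le_refl| left; auto] | auto]. }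
        exact (proj2 (N_r _ _ rVs) p sp h). }
      exists y. split; [auto|]. split; [auto|]. split; [auto|]. split; [auto|].
      split; [auto|]. split; [auto|].
      destruct (E_l _ _ lVy) as [hinf | [z [yz [sV rV]]]].
      + exfalso. destruct (Hnoright s) as [p sp]. apply (Vs_bad p sp). intros w a b. apply hinf.
        eauto using le_trans, lt_le.
      + assert (rVz : op_r lt V z) by (apply (Suff_r V y z); auto; apply (N_l _ _ lVy)).
        assert (Az : A z) by (apply (proj2 (h5 z) rVz)).
        destruct (tri z s) as [h|[h|h]].
        * exfalso. apply (lt_not_le _ _ h). apply smin; auto. eauto using lt_le_trans.
        * subst z. split; auto.
        * exfalso. apply (Vs_bad z h). intros w a b. apply sV; auto. eauto using le_trans, lt_le. }
  intro x; split.
  - intros [Ax [j [Aj [xj [jmin Bj]]]]].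
    destruct (st x j (conj Ax (conj Aj (conj xj jmin)))) as
        [lUx [y [xy [yj [sU [rU [rUy [lVy [sV rVj]]]]]]]]].
    assert (rQj : op_r lt Q j) by (apply h11; auto).
    destruct (E_r _ _ rQj) as [w [wj [sQ lQ]]].
    assert (lQw : op_l lt Q w) by (apply (Suff_l Q w j); auto; apply (N_r _ _ rQj)).
    assert (rPw : op_r lt P w) by (apply h9; auto).
    assert (rUw : op_r lt U w) by (apply (proj2 (proj2 (h12 w) rPw))).
    assert (nAw : ~ A w) by (intro; apply (proj1 (h3 w)); auto).
    assert (lgU : lgap U x) by apply (N_l _ _ lUx).
    destruct (tri w y) as [h|[h|h]].
    + exfalso. apply (proj2 (N_l _ _ lVy) w h). intros z a b. apply QV. apply sQ; auto.
      eauto using le_trans, lt_le.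
    + subst w.
      destruct (E_r _ _ rPw) as [v [vy [sP lP]]].
      assert (lPv : op_l lt P v) by (apply (Suff_l P v y); auto; apply (N_r _ _ rPw)).
      assert (Cv : C v) by (apply h7; auto).
      assert (Av : A v) by (apply (proj2 (proj2 (h6 v) Cv))).
      destruct (tri v x) as [h|[h|h]].
      * exfalso. apply (lgU v h). intros z a b. apply PU. apply sP; auto. eauto using le_trans, lt_le.
      * subst; auto.
      * exfalso. assert (le lt j v) by (apply jmin; auto).
        apply (lt_not_le v j); auto. eapply le_lt_trans; eauto.
    + exfalso.
      destruct (E_r _ _ rUw) as [v [vw [sU' lU']]].
      assert (lUv : op_l lt U v) by (apply (Suff_l U v w); auto; apply (N_r _ _ rUw)).
      assert (Av : A v) by (apply (proj2 (proj2 (h2 v) lUv))).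
      destruct (tri v x) as [h'|[h'|h']].
      * apply (lgU v h'). intros z a b. apply sU'; auto.
        apply le_trans with x; auto. left; eauto using trans.
      * subst v. apply (rU w h). intros z a b. apply sU'; auto.
        apply le_trans with y; auto. left; auto.
      * assert (le lt j v) by (apply jmin; auto).
        assert (vj : v = j) by (apply le_antisym; eauto using le_trans).
        subst v. assert (w = j) by (apply le_antisym; auto). subst; auto.
  - intros Cx.
    assert (Ax : A x) by (apply (proj2 (proj2 (h6 x) Cx))).
    assert (ex : exists y, A y /\ lt x y).
    { apply NNPP; intro hn. apply (proj1 (h13 x)). split; auto.
      unfold op_max, is_max.
      assert (hm : forall y, A y -> le lt y x).
      { intros y hy. apply not_lt_le; intro; apply hn; eauto. }
      split; [exists x; auto | split; auto]. }
    destruct ex as [y0 [Ay0 xy0]].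
    destruct (succ_ex A fA x y0 Ay0 xy0) as [s [As [xs smin]]].
    destruct (st x s (conj Ax (conj As (conj xs smin)))) as
        [lUx [y [xy [ys [sU [rU [rUy [lVy [sV rVs]]]]]]]]].
    assert (lPx : op_l lt P x) by (apply h7; auto).
    destruct (E_l _ _ lPx) as [hinf | [w [xw [sP rP]]]].
    + exfalso. assert (lUs : op_l lt U s).
      { apply h2; split; [apply PU, hinf; left; auto | auto]. }
      apply (proj2 (N_l _ _ lUs) x xs). intros z a b. apply PU, hinf; auto.
    + assert (rPw : op_r lt P w) by (apply (Suff_r P x w); auto; apply (N_l _ _ lPx)).
      assert (rUw : op_r lt U w) by (apply (proj2 (proj2 (h12 w) rPw))).
      destruct (tri w y) as [h|[h|h]].
      * exfalso. apply (proj2 (N_r _ _ rUw) y h). intros z a b. apply sU; auto. eauto using le_trans.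
      * subst w.
        assert (lQy : op_l lt Q y) by (apply h9; auto).
        destruct (E_l _ _ lQy) as [hinf | [z [yz [sQ rQ]]]].
        -- exfalso. destruct (Hnoright s) as [p sp].
           apply (proj2 (N_r _ _ rVs) p sp). intros w a b. apply QV, hinf.
           apply le_trans with s; auto. left; auto.
        -- assert (rQz : op_r lt Q z) by (apply (Suff_r Q y z); auto; apply (N_l _ _ lQy)).
           destruct (proj1 (h11 z) rQz) as [Bz rVz].
           assert (Az : A z) by (apply (proj2 (h5 z) rVz)).
           destruct (tri z s) as [h|[h|h]].
           ++ exfalso. apply (lt_not_le _ _ h). apply smin; auto. eauto using lt_le_trans.
           ++ subst z. split; auto. exists s. auto.
           ++ exfalso. apply (proj2 (N_r _ _ rVs) z h). intros w a b. apply QV, sQ; auto.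
              apply le_trans with s; auto. left; auto.
      * exfalso. apply (rU w h). intros z a b. apply PU, sP; auto.
        apply le_trans with y; auto. left; auto.
Qed.

Lemma fam (K : T -> T -> Prop) (lo hi : T -> T -> T) (S : T -> Prop)
 (hS : forall x, S x <-> exists a s, K a s /\ le lt (lo a s) x /\ le lt x (hi a s))
 (H1 : forall a s, K a s -> le lt (lo a s) (hi a s))
 (H2 : forall a s a' s', K a s -> K a' s' ->
     (lo a s = lo a' s' /\ hi a s = hi a' s') \/ lt (hi a s) (lo a' s') \/ lt (hi a' s') (lo a s))
 (H3 : forall a s, K a s -> exists g, lt (hi a s) g /\ forall x, lt (hi a s) x -> lt x g -> ~ S x) :
 (forall x, op_l lt S x <-> exists a s, K a s /\ x = lo a s) /\
 (forall x, op_r lt S x <-> exists a s, K a s /\ x = hi a s).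
Proof.
  assert (sub : forall a s, K a s -> sub_icc S (lo a s) (hi a s)).
  { intros a s k z h h'. apply hS. exists a, s. auto. }
  assert (rg : forall a s, K a s -> rgap S (hi a s)).
  { intros a s k p hp hs. destruct (H3 a s k) as [g [hg hg']].
    destruct (classic (lt p g)) as [c|c].
    - apply (hg' p hp c). apply hs; [left; auto| apply le_refl].
    - destruct (Hdense _ _ hg) as [q [q1 q2]].
      apply (hg' q q1 q2). apply hs; [left; auto|]. left. eapply lt_le_trans; eauto. apply not_lt_le; auto. }
  assert (lg : forall a s, K a s -> lgap S (lo a s)).
  { intros a s k p hp hs.
    assert (Sp : S p) by (apply hs; [apply le_refl| left; auto]).
    destruct (proj1 (hS p) Sp) as [a1 [s1 [k1 [l1 u1]]]].
    destruct (H2 a s a1 s1 k k1) as [[e1 e2]|[c|c]].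
    - rewrite <- e1 in l1. exact (lt_not_le _ _ hp l1).
    - apply (lt_not_le _ _ hp). apply le_trans with (lo a1 s1); auto.
      apply le_trans with (hi a s); auto. left; auto.
    - destruct (H3 a1 s1 k1) as [g [hg hg']].
      destruct (classic (lt (lo a s) g)) as [c'|c'].
      + apply (hg' _ c c'). apply hs; [left; auto| apply le_refl].
      + destruct (Hdense _ _ hg) as [q [q1 q2]].
        apply (hg' q q1 q2). apply hs.
        * apply le_trans with (hi a1 s1); auto. left; auto.
        * left. eapply lt_le_trans; eauto. apply not_lt_le; auto. }
  split; intro x; split.
  - intro h. destruct (N_l _ _ h) as [Sx lgx].
    destruct (proj1 (hS x) Sx) as [a [s [k [l1 u1]]]]. exists a, s. split; auto.
    destruct l1 as [c|c]; auto. exfalso. apply (lgx _ c). intros z a' b'.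
    apply hS. exists a, s. split; auto. split; auto. eapply le_trans; eauto.
  - intros [a [s [k e]]]; subst. apply (Suff_l S _ (hi a s)); auto.
  - intro h. destruct (N_r _ _ h) as [Sx rgx].
    destruct (proj1 (hS x) Sx) as [a [s [k [l1 u1]]]]. exists a, s. split; auto.
    destruct u1 as [c|c]; auto. exfalso. apply (rgx _ c). intros z a' b'.
    apply hS. exists a, s. split; auto. split; auto. eapply le_trans; eauto.
  - intros [a [s [k e]]]; subst. apply (Suff_r S (lo a s)); auto.
Qed.

Lemma succ_uniq A a s s' : Succ A a s -> Succ A a s' -> s = s'.
Proof.
  intros [_ [h1 [h2 h3]]] [_ [g1 [g2 g3]]]. apply le_antisym; auto.
Qed.

Lemma succ_ord A a s a' s' : Succ A a s -> Succ A a' s' -> lt a a' -> le lt s a'.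
Proof. intros [_ [h1 [h2 h3]]] [g0 _] c. apply h3; auto. Qed.

Lemma fam_U A (m : T -> T -> T) (Hm : forall a s, lt a s -> lt a (m a s) /\ lt (m a s) s)
  (F : T -> Prop) :
  let S := fun x => exists a s, (Succ A a s /\ F s) /\ le lt a x /\ le lt x (m a s) in
  (forall x, op_l lt S x <-> exists a s, (Succ A a s /\ F s) /\ x = a) /\
  (forall x, op_r lt S x <-> exists a s, (Succ A a s /\ F s) /\ x = m a s).
Proof.
  intro S.
  apply (fam (fun a s => Succ A a s /\ F s) (fun a s => a) m S).
  - intro; reflexivity.
  - intros a s [[_ [_ [h _]]] _]. left; apply (Hm _ _ h).
  - intros a s a' s' [k _] [k' _].
    destruct (tri a a') as [c|[c|c]].
    + right; left. eapply lt_le_trans; [apply Hm; apply k|]. eapply succ_ord; eauto.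
    + subst. left. rewrite (succ_uniq _ _ _ _ k k'). auto.
    + right; right. eapply lt_le_trans; [apply Hm; apply k'|]. eapply succ_ord; eauto.
  - intros a s [k _]. exists s. split; [apply Hm, k|].
    intros x c1 c2 [a' [s' [[k' _] [l1 u1]]]].
    destruct (tri a' a) as [c|[c|c]].
    + assert (le lt s' a) by (eapply succ_ord; eauto).
      apply (lt_not_le _ _ c1). apply le_trans with (m a' s'); auto.
      apply le_trans with s'; [left; apply Hm, k'|].
      apply le_trans with a; auto. left; apply Hm, k.
    + subst. rewrite (succ_uniq _ _ _ _ k' k) in u1. exact (lt_not_le _ _ c1 u1).
    + assert (le lt s a') by (eapply succ_ord; eauto).
      apply (lt_not_le _ _ c2). eapply le_trans; eauto.
Qed.

Lemma fam_V A (fA : finite_set A) (m : T -> T -> T)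
  (Hm : forall a s, lt a s -> lt a (m a s) /\ lt (m a s) s) (F : T -> Prop) :
  let S := fun x => exists a s, (Succ A a s /\ F s) /\ le lt (m a s) x /\ le lt x s in
  (forall x, op_l lt S x <-> exists a s, (Succ A a s /\ F s) /\ x = m a s) /\
  (forall x, op_r lt S x <-> exists a s, (Succ A a s /\ F s) /\ x = s).
Proof.
  intro S.
  apply (fam (fun a s => Succ A a s /\ F s) m (fun a s => s) S).
  - intro; reflexivity.
  - intros a s [[_ [_ [h _]]] _]. left; apply (Hm _ _ h).
  - intros a s a' s' [k _] [k' _].
    destruct (tri a a') as [c|[c|c]].
    + right; left. apply le_lt_trans with a'; [eapply succ_ord; eauto|]. apply Hm, k'.
    + subst. left. rewrite (succ_uniq _ _ _ _ k k'). auto.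
    + right; right. apply le_lt_trans with a; [eapply succ_ord; eauto|]. apply Hm, k.
  - intros a s [k _].
    assert (above : forall x, lt s x -> S x -> exists a' s', Succ A a' s' /\ le lt s a' /\
                le lt (m a' s') x).
    { intros x c1 [a' [s' [[k' _] [l1 u1]]]]. exists a', s'. split; auto. split; auto.
      destruct (tri a' a) as [c|[c|c]].
      - exfalso. assert (le lt s' a) by (eapply succ_ord; eauto).
        apply (lt_not_le _ _ c1). apply le_trans with s'; auto.
        apply le_trans with a; auto. left; apply k.
      - subst. rewrite (succ_uniq _ _ _ _ k' k) in u1. exfalso; exact (lt_not_le _ _ c1 u1).
      - eapply succ_ord; eauto. }
    destruct (classic (exists s2, Succ A s s2)) as [[s2 k2]|nk].
    + exists (m s s2). split; [apply Hm, k2|].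
      intros x c1 c2 Sx.
      destruct (above x c1 Sx)
        as [a' [s' [k' [l1 u1]]]].
      destruct l1 as [c|c].
      * assert (le lt s2 a') by (eapply succ_ord; eauto).
        apply (lt_not_le _ _ c2). apply le_trans with (m a' s'); auto.
        left. apply lt_le_trans with s2; [apply Hm, k2|].
        apply le_trans with a'; auto. left; apply Hm, k'.
      * subst. rewrite (succ_uniq _ _ _ _ k' k2) in u1. exact (lt_not_le _ _ c2 u1).
    + destruct (Hnoright s) as [g hg]. exists g. split; auto.
      intros x c1 c2 Sx. destruct (above x c1 Sx) as [a' [s' [k' [l1 u1]]]].
      destruct l1 as [c|c].
      * apply nk. destruct k as [_ [As _]]. destruct k' as [Aa' _].
        destruct (succ_ex A fA s a' Aa' c) as [s2 [h1 [h2 h3]]].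
        exists s2. split; auto.
      * subst. apply nk; eauto.
Qed.

Lemma filter_ex {X : Type} (L : list X) (Pr : X -> Prop) :
  exists l', forall p, In p l' <-> In p L /\ Pr p.
Proof.
  induction L as [|a L [l' IH]].
  - exists nil; simpl; tauto.
  - destruct (classic (Pr a)) as [h|h].
    + exists (a :: l'). intro p; simpl. split.
      * intros [e|q]; [subst; auto | apply IH in q; tauto].
      * intros [[e|q] hp]; [left; auto | right; apply IH; auto].
    + exists l'. intro p; simpl. split.
      * intro q; apply IH in q; tauto.
      * intros [[e|q] hp]; [subst; contradiction | apply IH; auto].
Qed.

Lemma fci_fam A (fA : finite_set A) (F : T -> Prop) (lo hi : T -> T -> T) :
  fci lt (fun x => exists a s, (Succ A a s /\ F s) /\ le lt (lo a s) x /\ le lt x (hi a s)).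
Proof.
  destruct fA as [l hl].
  destruct (filter_ex (list_prod l l) (fun p => Succ A (fst p) (snd p) /\ F (snd p))) as [l' hl'].
  exists (map (fun p => Icc (lo (fst p) (snd p)) (hi (fst p) (snd p))) l').
  intro x; split.
  - intros [a [s [k [h1 h2]]]]. exists (Icc (lo a s) (hi a s)). split; [|simpl; auto].
    apply in_map_iff. exists (a, s). split; auto. apply hl'. split; [|exact k].
    destruct k as [[Aa [As _]] _]. apply in_prod; apply hl; auto.
  - intros [J [hJ hx]]. apply in_map_iff in hJ. destruct hJ as [[a s] [e hp]]. subst J.
    apply hl' in hp. destruct hp as [_ k]. simpl in *. exists a, s. auto.
Qed.

Lemma mid_ex : exists m : T -> T -> T, forall a s, lt a s -> lt a (m a s) /\ lt (m a s) s.
Proof.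
  exists (fun a s => epsilon (inhabits zero) (fun z => lt a z /\ lt z s)).
  intros a s h. apply (epsilon_spec (inhabits zero) (fun z => lt a z /\ lt z s)).
  apply Hdense; auto.
Qed.

Lemma backward A B C (fA : finite_set A) (hC : seteq (ips lt A B) C) :
 exists U V P Q, fci lt U /\ fci lt V /\ fci lt P /\ fci lt Q /\
 seteq A (op_cup (op_l lt U) (op_max lt A)) /\
 seteq (op_cap U A) (op_l lt U) /\
 seteq (op_cap (op_r lt U) A) op_bot /\
 seteq (op_l lt V) (op_r lt U) /\
 seteq (op_cap V A) (op_r lt V) /\
 seteq (op_cap C A) C /\
 seteq (op_l lt P) C /\
 seteq (op_cap P U) P /\
 seteq (op_r lt P) (op_l lt Q) /\
 seteq (op_cap Q V) Q /\
 seteq (op_r lt Q) (op_cap B (op_r lt V)) /\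
 seteq (op_cap (op_r lt P) (op_r lt U)) (op_r lt P) /\
 seteq (op_cap C (op_max lt A)) op_bot.
Proof.
  destruct mid_ex as [m Hm].
  pose (U := fun x => exists a s, (Succ A a s /\ True) /\ le lt a x /\ le lt x (m a s)).
  pose (V := fun x => exists a s, (Succ A a s /\ True) /\ le lt (m a s) x /\ le lt x s).
  pose (P := fun x => exists a s, (Succ A a s /\ B s) /\ le lt a x /\ le lt x (m a s)).
  pose (Q := fun x => exists a s, (Succ A a s /\ B s) /\ le lt (m a s) x /\ le lt x s).
  assert (lU : forall x, op_l lt U x <-> exists a s, (Succ A a s /\ True) /\ x = a)
    by exact (proj1 (fam_U A m Hm (fun _ => True))).
  assert (rU : forall x, op_r lt U x <-> exists a s, (Succ A a s /\ True) /\ x = m a s)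
    by exact (proj2 (fam_U A m Hm (fun _ => True))).
  assert (lV : forall x, op_l lt V x <-> exists a s, (Succ A a s /\ True) /\ x = m a s)
    by exact (proj1 (fam_V A fA m Hm (fun _ => True))).
  assert (rV : forall x, op_r lt V x <-> exists a s, (Succ A a s /\ True) /\ x = s)
    by exact (proj2 (fam_V A fA m Hm (fun _ => True))).
  assert (lP : forall x, op_l lt P x <-> exists a s, (Succ A a s /\ B s) /\ x = a)
    by exact (proj1 (fam_U A m Hm B)).
  assert (rP : forall x, op_r lt P x <-> exists a s, (Succ A a s /\ B s) /\ x = m a s)
    by exact (proj2 (fam_U A m Hm B)).
  assert (lQ : forall x, op_l lt Q x <-> exists a s, (Succ A a s /\ B s) /\ x = m a s)
    by exact (proj1 (fam_V A fA m Hm B)).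
  assert (rQ : forall x, op_r lt Q x <-> exists a s, (Succ A a s /\ B s) /\ x = s)
    by exact (proj2 (fam_V A fA m Hm B)).
  assert (Hm' : forall a s, Succ A a s -> lt a (m a s) /\ lt (m a s) s)
    by (intros a s [_ [_ [h _]]]; auto).
  exists U, V, P, Q.
  split; [exact (fci_fam A fA (fun _ => True) (fun a s => a) m)|].
  split; [exact (fci_fam A fA (fun _ => True) m (fun a s => s))|].
  split; [exact (fci_fam A fA B (fun a s => a) m)|].
  split; [exact (fci_fam A fA B m (fun a s => s))|].
  unfold seteq, op_cup, op_cap, op_bot.
  split; [|split; [|split; [|split; [|split; [|split; [|split; [|split; [|split; [|split;
    [|split; [|split]]]]]]]]]]]; intro x.
  - split.
    + intro Ax. destruct (classic (exists y, A y /\ lt x y)) as [[y [Ay xy]]|hn].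
      * destruct (succ_ex A fA x y Ay xy) as [s [As [xs smin]]].
        left. apply lU. exists x, s. split; auto. split; auto. split; auto.
      * right. unfold op_max, is_max.
        assert (hm : forall y, A y -> le lt y x).
        { intros y hy. apply not_lt_le; intro; apply hn; eauto. }
        split; [exists x; auto | split; auto].
    + intros [h|[_ [h _]]]; auto. apply lU in h. destruct h as [a [s [[[Aa _] _] e]]]. subst; auto.
  - split.
    + intros [[a [s [[k _] [l1 u1]]]] Ax]. apply lU. exists a, s. split; [split; auto|].
      destruct l1 as [c|c]; auto. exfalso.
      pose proof (proj2 (Hm' a s k)) as ms.
      destruct k as [_ [_ [_ smin]]]. assert (le lt s x) by auto.
      apply (lt_not_le _ _ ms). eapply le_trans; eauto.
    + intro h. apply lU in h. destruct h as [a [s [[k _] e]]]. subst.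
      split; [|apply k]. exists a, s. split; [split; auto|]. split; [apply le_refl|].
      left; apply Hm', k.
  - split; [|tauto]. intros [h Ax]. apply rU in h. destruct h as [a [s [[k _] e]]]. subst.
    destruct (Hm' a s k) as [c1 c2]. destruct k as [_ [_ [_ smin]]].
    exact (lt_not_le _ _ c2 (smin _ Ax c1)).
  - split; intro h; [apply rU; apply lV in h | apply lV; apply rU in h]; exact h.
  - split.
    + intros [[a [s [[k _] [l1 u1]]]] Ax]. apply rV. exists a, s. split; [split; auto|].
      destruct u1 as [c|c]; auto. exfalso.
      assert (ax : lt a x) by (eapply lt_le_trans; [apply Hm', k| auto]).
      destruct k as [_ [_ [_ smin]]]. exact (lt_not_le _ _ c (smin _ Ax ax)).
    + intro h. apply rV in h. destruct h as [a [s [[k _] e]]]. subst.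
      split; [|apply k]. exists a, s. split; [split; auto|]. split; [left; apply Hm', k|apply le_refl].
  - split; [tauto|]. intro Cx. split; auto. apply hC in Cx. apply Cx.
  - split.
    + intro h. apply lP in h. destruct h as [a [s [[[Aa [As [h1 h2]]] Bs] e]]]. subst.
      apply hC. split; auto. exists s. auto.
    + intro Cx. apply hC in Cx. destruct Cx as [Ax [j [Aj [xj [jm Bj]]]]].
      apply lP. exists x, j. split; auto. split; [split; auto|auto].
  - split; [tauto|]. intro h. split; auto.
    destruct h as [a [s [[k _] r]]]. exists a, s. auto.
  - split; intro h; [apply lQ; apply rP in h | apply rP; apply lQ in h]; exact h.
  - split; [tauto|]. intro h. split; auto.
    destruct h as [a [s [[k _] r]]]. exists a, s. auto.
  - split.
    + intro h. apply rQ in h. destruct h as [a [s [[k Bs] e]]]. subst. split; auto.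
      apply rV. exists a, s. auto.
    + intros [Bx h]. apply rV in h. destruct h as [a [s [[k _] e]]]. subst.
      apply rQ. exists a, s. auto.
  - split; [tauto|]. intro h. split; auto.
    apply rP in h. destruct h as [a [s [[k _] e]]]. apply rU. exists a, s. auto.
  - split; [|tauto]. intros [Cx [_ [_ hm]]].
    apply hC in Cx. destruct Cx as [Ax [j [Aj [xj _]]]].
    exact (lt_not_le _ _ xj (hm j Aj)).
Qed.

Lemma main_sec : exists phi : exformula,
    forall A B C : T -> Prop,
      finite_set A -> finite_set B -> finite_set C ->
      forall env : nat -> T -> Prop,
        (forall n, fci lt (env n)) ->
        env 0 = A -> env 1 = B -> env 2 = C ->
        (sat_ex lt zero env phi <-> seteq (ips lt A B) C).
Proof.
  exists (EEx 3 (EEx 4 (EEx 5 (EEx 6 (EQF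
    (FAnd (FEq (TVar 0) (TCup (TL (TVar 3)) (TMax (TVar 0))))
    (FAnd (FEq (TCap (TVar 3) (TVar 0)) (TL (TVar 3)))
    (FAnd (FEq (TCap (TR (TVar 3)) (TVar 0)) TBot)
    (FAnd (FEq (TL (TVar 4)) (TR (TVar 3)))
    (FAnd (FEq (TCap (TVar 4) (TVar 0)) (TR (TVar 4)))
    (FAnd (FEq (TCap (TVar 2) (TVar 0)) (TVar 2))
    (FAnd (FEq (TL (TVar 5)) (TVar 2))
    (FAnd (FEq (TCap (TVar 5) (TVar 3)) (TVar 5))
    (FAnd (FEq (TR (TVar 5)) (TL (TVar 6)))
    (FAnd (FEq (TCap (TVar 6) (TVar 4)) (TVar 6))
    (FAnd (FEq (TR (TVar 6)) (TCap (TVar 1) (TR (TVar 4))))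
    (FAnd (FEq (TCap (TR (TVar 5)) (TR (TVar 3))) (TR (TVar 5)))
          (FEq (TCap (TVar 2) (TMax (TVar 0))) TBot)))))))))))))))))).
  intros A B C fA fB fC env Henv e0 e1 e2.
  simpl. unfold update. simpl. rewrite e0, e1, e2.
  split.
  - intros [U [_ [V [_ [P [_ [Q [_ H]]]]]]]].
    destruct H as [h1 [h2 [h3 [h4 [h5 [h6 [h7 [h8 [h9 [h10 [h11 [h12 h13]]]]]]]]]]]].
    eapply forward; eauto.
  - intro hC.
    destruct (backward A B C fA hC) as [U [V [P [Q [fU [fV [fP [fQ H]]]]]]]].
    exists U; split; [auto|]. exists V; split; [auto|].
    exists P; split; [auto|]. exists Q; split; [auto|].
    exact H.
Qed.
End Gen.

Theorem corollary5p5 (T : Type) (lt : T -> T -> Prop) (zero : T)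
  (Hord : strict_total_order lt) (Hdense : dense_order lt)
  (Hzero : least_element lt zero) (Hnoright : no_right_endpoint lt) :
  exists phi : exformula,
    forall A B C : T -> Prop,
      finite_set A -> finite_set B -> finite_set C ->
      forall env : nat -> T -> Prop,
        (forall n, fci lt (env n)) ->
        env 0 = A -> env 1 = B -> env 2 = C ->
        (sat_ex lt zero env phi <-> seteq (ips lt A B) C).
Proof.
  eapply main_sec; eauto.
Qed.
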